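(* In the setting below, for every $w\in W_M^Q$, \[ (\chi^M_w-\chi^H_w)(x_Q) = |I_w^M\le s|. \]
   Context: Fix $1\le k\le s<r$. Let $\epsilon_1,\ldots,\epsilon_r$ be an orthonormal basis of a real/complex weight space $\mathfrak{h}^*$, $\epsilon_1^*,\ldots,\epsilon_r^*$ the dual basis of $\mathfrak{h}$. $M=\mathrm{Sp}(2s)\times\mathrm{Sp}(2(r-s))$ has positive roots $R_M^+$: $\epsilon_i\pm\epsilon_j$ ($1\le i<j\le s$), $2\epsilon_i$ ($1\le i\le s$), and $\epsilon_i\pm\epsilon_j$ ($s<i<j\le r$), $2\epsilon_i$ ($s<i\le r$). $H=\mathrm{SO}(2s+1)\times\mathrm{Sp}(2(r-s))$ has the same weight space, positive roots $R^+_H$: $\epsilon_i\pm\epsilon_j$ ($1\le i<j\le s$), $\epsilon_i$ ($1\le i\le s$), and the same second-factor roots as $M$. $M$ and $H$ share the Weyl group $W_M$. $Q$ is the maximal parabolic of $M$ associated to omitting the simple root $\epsilon_k-\epsilon_{k+1}$ of the first factor (so $M/Q\cong\mathrm{IG}(k,2s)$), $Q^H$ the corresponding parabolic of $H$, and $W_M^Q$ the minimal length coset representatives (the same for $Q$ and $Q^H$). $x_Q=\sum_{i=1}^k\epsilon_i^*$. $\chi^M_w=\sum_{\beta\in(R^+_M\setminus R^+_{L})\cap w^{-1}R^+_M}\beta$ with $R^+_L$ the positive roots of the Levi of $Q$, and $\chi^H_w$ defined likewise with $R^+_H$ and the Levi of $Q^H$. $I^M_w\subseteq\{1,\ldots,2s\}$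 is the $k$-subset indexing the Schubert cell $C^M_w$ of $\mathrm{IG}(k,2s)$ relative to the standard isotropic flag of $\mathbb{C}^{2s}$ with ordered basis $e_1,\ldots,e_s,e_s',\ldots,e_1'$ (the cell being $\{W:\dim(W\cap F_j)=|\{i\in I^M_w:i\le j\}|\ \forall j\}$), and $|I\le s|$ is the number of elements of $I$ that are $\le s$. *)

(* Defs.v *)
(* Weight space = row vectors 'rV[int]_r, coordinates w.r.t.
   eps_1..eps_r (0-based indices: eps_(i+1) is 'e_i). *)
From mathcomp Require Import all_boot all_order all_algebra all_fingroup.
Set Implicit Arguments. Unset Strict Implicit. Unset Printing Implicit Defensive.
Import GRing.Theory.
Local Open Scope ring_scope.

Definition eps (r : nat) (i : 'I_r) : 'rV[int]_r := delta_mx 0 i.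

Definition rminus (r : nat) (P : 'I_r -> 'I_r -> bool) : seq 'rV[int]_r :=
  [seq eps p.1 - eps p.2 | p <- enum [pred p : 'I_r * 'I_r | (p.1 < p.2)%N && P p.1 p.2]].
Definition rplus (r : nat) (P : 'I_r -> 'I_r -> bool) : seq 'rV[int]_r :=
  [seq eps p.1 + eps p.2 | p <- enum [pred p : 'I_r * 'I_r | (p.1 < p.2)%N && P p.1 p.2]].
Definition rlong (r : nat) (c : int) (Q : 'I_r -> bool) : seq 'rV[int]_r :=
  [seq c *: eps i | i <- enum [pred i : 'I_r | Q i]].

Definition sameblock (r s : nat) (i j : 'I_r) : bool := ((i < s)%N == (j < s)%N).

(* R_M^+ for M = Sp(2s) x Sp(2(r-s)) *)
Definition RMpos (r s : nat) : seq 'rV[int]_r :=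
  rminus (@sameblock r s) ++ rplus (@sameblock r s) ++ rlong 2 (fun _ => true).
(* R_H^+ for H = SO(2s+1) x Sp(2(r-s)) *)
Definition RHpos (r s : nat) : seq 'rV[int]_r :=
  rminus (@sameblock r s) ++ rplus (@sameblock r s)
  ++ rlong 1 (fun i => (i < s)%N) ++ rlong 2 (fun i => (s <= i)%N).

(* pairs i<j lying in the same block of the Levi GL(k) x (rank s-k) x (second factor) *)
Definition leviA (r k s : nat) (i j : 'I_r) : bool :=
  [|| (j < k)%N, (k <= i)%N && (j < s)%N | (s <= i)%N].
Definition leviC (r k s : nat) (i j : 'I_r) : bool :=
  ((k <= i)%N && (j < s)%N) || (s <= i)%N.
Definition RLMpos (r k s : nat) : seq 'rV[int]_r :=
  rminus (@leviA r k s) ++ rplus (@leviC r k s) ++ rlong 2 (fun i => (k <= i)%N).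
Definition RLHpos (r k s : nat) : seq 'rV[int]_r :=
  rminus (@leviA r k s) ++ rplus (@leviC r k s)
  ++ rlong 1 (fun i => (k <= i)%N && (i < s)%N) ++ rlong 2 (fun i => (s <= i)%N).

(* Weyl group elements as signed permutation matrices acting on the right:
   w(lambda) := lambda *m A, so w(eps_i) = (-1)^(sg i) eps_(sigma i). *)
Definition spmx (r : nat) (sigma : {perm 'I_r}) (sg : {ffun 'I_r -> bool}) : 'M[int]_r :=
  \matrix_(i, j) (if sigma i == j then (-1) ^+ sg i else 0).
Definition blockpres (r s : nat) (sigma : {perm 'I_r}) : bool :=
  [forall i : 'I_r, (sigma i < s)%N == (i < s)%N].

Definition isWM (r s : nat) (A : 'M[int]_r) : bool :=
  [exists sigma : {perm 'I_r}, exists sg : {ffun 'I_r -> bool},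
     (A == spmx sigma sg) && blockpres s sigma].
(* W_L: Weyl group of the Levi of Q = S_k x W(C_(s-k)) x W(C_(r-s)) *)
Definition isWL (r k s : nat) (A : 'M[int]_r) : bool :=
  [exists sigma : {perm 'I_r}, exists sg : {ffun 'I_r -> bool},
     [&& A == spmx sigma sg, blockpres s sigma &
         [forall i : 'I_r, (i < k)%N ==> ((sigma i < k)%N && ~~ sg i)]]].

Definition wlen (r s : nat) (A : 'M[int]_r) : nat :=
  count (fun a => a *m A \notin RMpos r s) (RMpos r s).

(* W_M^Q: minimal length representatives of the cosets w W_L
   (the product w v, v in W_L, acts as lambda |-> (lambda *m V) *m A) *)
Definition inWMQ (r k s : nat) (A : 'M[int]_r) : Prop :=
  isWM s A /\ forall V : 'M[int]_r, isWL k s V -> (wlen s A <= wlen s (V *m A))%N.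

Definition chi (r : nat) (R RL : seq 'rV[int]_r) (A : 'M[int]_r) : 'rV[int]_r :=
  \sum_(b <- R | (b \notin RL) && (b *m A \in R)) b.
Definition chiM (r k s : nat) (A : 'M[int]_r) := chi (RMpos r s) (RLMpos r k s) A.
Definition chiH (r k s : nat) (A : 'M[int]_r) := chi (RHpos r s) (RLHpos r k s) A.

Definition evxQ (r k : nat) (b : 'rV[int]_r) : int := \sum_(i < r | (i < k)%N) b 0 i.

(* I_w^M (0-based, as subset of 'I_(2s)): basis e_1..e_s,e_s',..,e_1' is indexed
   0..2s-1; the T-fixed point wQ is span{w e_1,..,w e_k}, where w e_i = e_j if
   w eps_i = eps_j and w e_i = e_j' if w eps_i = -eps_j. *)
Definition Iw (r k s : nat) (A : 'M[int]_r) : {set 'I_(s + s)} :=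
  [set x : 'I_(s + s) | [exists i : 'I_r, exists j : 'I_r,
     [&& (i < k)%N, (j < s)%N &
        ((A i j == 1) && ((x : nat) == j)) ||
        ((A i j == -1) && ((x : nat) == (s + s).-1 - j)%N)]]].

(* Main.v *)
Require Import Defs.
From mathcomp Require Import all_boot all_order all_algebra all_fingroup.
From mathcomp Require Import zify.
Import GRing.Theory.
Set Implicit Arguments. Unset Strict Implicit.
Local Open Scope ring_scope.

Lemma epsE r (i : 'I_r) j : eps i 0 j = (i == j)%:R.
Proof. by rewrite /eps mxE eqxx /= eq_sym. Qed.

Lemma eps_mul r (sg : {perm 'I_r}) (f : {ffun 'I_r -> bool}) (d : int) i :
  (d *: eps i) *m spmx sg f = (d * (-1) ^+ f i) *: eps (sg i).
Proof.
rewrite -scalemxAl /eps -rowE -scalerA; congr (_ *: _).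
apply/rowP => j; rewrite !mxE eqxx /= [j == _]eq_sym.
by case: eqP => _; rewrite ?mulr1 ?mulr0.
Qed.

Definition shortv r (x : 'rV[int]_r) := exists p q (u w : int),
  [/\ p != q, u != 0, w != 0 & x = u *: eps p + w *: eps q].

Lemma short_neq_long r (p q i : 'I_r) (u w c : int) :
  p != q -> u != 0 -> w != 0 -> u *: eps p + w *: eps q != c *: eps i.
Proof.
move=> pq u0 w0; apply/eqP => E.
have Ep := congr1 (fun v : 'rV[int]_r => v 0 p) E; have Eq := congr1 (fun v : 'rV[int]_r => v 0 q) E.
move: Ep Eq; rewrite /= !mxE !eqxx /= [q == p]eq_sym (negbTE pq) !mulr0 !mulr1 addr0 add0r.
case: (p =P i) => [<-|_]; first by rewrite [q == p]eq_sym (negbTE pq) mulr0 => _ /eqP; rewrite (negbTE w0).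
by rewrite mulr0 => /eqP; rewrite (negbTE u0).
Qed.

Lemma rminus_short r P (x : 'rV[int]_r) : x \in rminus P -> shortv x.
Proof.
case/mapP => [[a b]]; rewrite mem_enum inE /= => /andP[ab _] ->.
exists a, b, 1, (-1); split => //; last by rewrite !scaleNr !scale1r.
by rewrite neq_ltn ab.
Qed.

Lemma rplus_short r P (x : 'rV[int]_r) : x \in rplus P -> shortv x.
Proof.
case/mapP => [[a b]]; rewrite mem_enum inE /= => /andP[ab _] ->.
exists a, b, 1, 1; split => //; last by rewrite !scale1r.
by rewrite neq_ltn ab.
Qed.

Lemma short_mul r (sg : {perm 'I_r}) f (x : 'rV[int]_r) : shortv x -> shortv (x *m spmx sg f).
Proof.
case=> p [q [u [w [pq u0 w0 ->]]]].
exists (sg p), (sg q), (u * (-1) ^+ f p), (w * (-1) ^+ f q); split.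
- by rewrite (inj_eq perm_inj).
- by rewrite mulf_neq0 // signr_eq0.
- by rewrite mulf_neq0 // signr_eq0.
- by rewrite mulmxDl !eps_mul.
Qed.

Lemma short_notlong r (x : 'rV[int]_r) c Q : shortv x -> (x \in rlong c Q) = false.
Proof.
case=> p [q [u [w [pq u0 w0 ->]]]]; apply/negbTE/negP => /mapP[i _ /eqP].
by apply/negP; apply: short_neq_long.
Qed.

Lemma long_notminus r (d : int) (j : 'I_r) P : (d *: eps j \in rminus P) = false.
Proof.
apply/negbTE/negP => /rminus_short [p [q [u [w [pq u0 w0 E]]]]].
by move: (@short_neq_long _ p q j u w d pq u0 w0); rewrite -E eqxx.
Qed.
Lemma long_notplus r (d : int) (j : 'I_r) P : (d *: eps j \in rplus P) = false.
Proof.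
apply/negbTE/negP => /rplus_short [p [q [u [w [pq u0 w0 E]]]]].
by move: (@short_neq_long _ p q j u w d pq u0 w0); rewrite -E eqxx.
Qed.

Lemma long_notshort r (d : int) (j : 'I_r) P :
  ((d *: eps j \in rminus P) = false) /\ ((d *: eps j \in rplus P) = false).
Proof.
have H : forall x, shortv x -> x <> d *: eps j.
  move=> x [p [q [u [w [pq u0 w0 ->]]]]] /eqP; apply/negP; exact: short_neq_long.
split; apply/negbTE/negP.
- by move/rminus_short/H.
- by move/rplus_short/H.
Qed.

Lemma long_mem r (d c : int) (j : 'I_r) Q : d != 0 ->
  (d *: eps j \in rlong c Q) = (d == c) && Q j.
Proof.
move=> d0; apply/mapP/andP => [[i]|[/eqP -> Qj]]; last first.
  by exists j; rewrite // mem_enum inE.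
rewrite mem_enum inE => Qi E.
have := congr1 (fun v : 'rV[int]_r => v 0 j) E; rewrite /= !mxE !eqxx /= mulr1.
case: (j =P i) => [ji|_]; first by rewrite mulr1 => ->; rewrite ji eqxx.
by rewrite mulr0 => /eqP; rewrite (negbTE d0).
Qed.

Lemma evxQD r k (a b : 'rV[int]_r) : evxQ k (a + b) = evxQ k a + evxQ k b.
Proof. by rewrite /evxQ -big_split; apply: eq_bigr => j _; rewrite mxE. Qed.
Lemma evxQ0 r k : evxQ k (0 : 'rV[int]_r) = 0.
Proof. by rewrite /evxQ big1 // => j _; rewrite mxE. Qed.
Lemma evxQN r k (a : 'rV[int]_r) : evxQ k (- a) = - evxQ k a.
Proof. by rewrite /evxQ -sumrN; apply: eq_bigr => j _; rewrite mxE. Qed.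
Lemma evxQ_sum r k (I : Type) (l : seq I) (P : pred I) (F : I -> 'rV[int]_r) :
  evxQ k (\sum_(x <- l | P x) F x) = \sum_(x <- l | P x) evxQ k (F x).
Proof. exact: (big_morph _ (@evxQD r k) (@evxQ0 r k)). Qed.
Lemma evxQ_long r k (c : int) (i : 'I_r) :
  evxQ k (c *: eps i) = if (i < k)%N then c else 0.
Proof.
rewrite /evxQ; under eq_bigr => j _ do rewrite !mxE eqxx /=.
case: ifP => ik.
  rewrite (bigD1 i) //= eqxx mulr1 big1 ?addr0 // => j /andP[_ /negbTE ->].
  by rewrite mulr0.
rewrite big1 // => j jk; case: (j =P i) => [ji|_]; last by rewrite mulr0.
by move: jk; rewrite ji ik.
Qed.

Lemma chi_short r k s (sg : {perm 'I_r}) f (b : 'rV[int]_r) :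
  b \in rminus (@sameblock r s) ++ rplus (@sameblock r s) ->
  (b \notin RLMpos r k s) && (b *m spmx sg f \in RMpos r s) =
  (b \notin RLHpos r k s) && (b *m spmx sg f \in RHpos r s).
Proof.
move=> hb.
have bs : shortv b by move: hb; rewrite mem_cat => /orP[/rminus_short|/rplus_short].
have bAs := short_mul sg f bs.
by rewrite /RLMpos /RLHpos /RMpos /RHpos !mem_cat !(short_notlong _ _ bs) !(short_notlong _ _ bAs) !orbF.
Qed.

Theorem mainTheorem8 (k s r : nat) (hk : (1 <= k)%N) (hks : (k <= s)%N) (hsr : (s < r)%N)
  (A : 'M[int]_r) (hA : inWMQ k s A) :
  evxQ k (chiM k s A - chiH k s A) = (#|[set x in Iw k s A | (x < s)%N]|)%:Z.
Proof.
move: hA => [/existsP[sg /existsP[f /andP[/eqP -> hbp]]] _].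
rewrite /chiM /chiH /chi {1}/RMpos {1}/RHpos !big_cat /=.
have E : forall l, {subset l <= rminus (@sameblock r s) ++ rplus (@sameblock r s)} ->
  \sum_(b <- l | (b \notin RLMpos r k s) && (b *m spmx sg f \in RMpos r s)) b =
  \sum_(b <- l | (b \notin RLHpos r k s) && (b *m spmx sg f \in RHpos r s)) b.
  move=> l hl; rewrite big_seq_cond [RHS]big_seq_cond; apply: eq_bigl => b.
  by case hb: (b \in l) => //=; rewrite (chi_short _ _ _ (hl _ hb)).
rewrite (E (rminus (@sameblock r s))) ?(E (rplus (@sameblock r s))); try by move=> b hb; rewrite mem_cat hb ?orbT.
have alg : forall X Y L L' : 'rV[int]_r, (X + (Y + L)) - (X + (Y + L')) = L - L'.
  by move=> X Y L L'; rewrite opprD addrACA subrr add0r opprD addrACA subrr add0r.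
have sis : forall i : 'I_r, (i < s)%N -> (sg i < s)%N.
  by move=> i; move/forallP: hbp => /(_ i)/eqP ->.
have SM : evxQ k (\sum_(b <- rlong 2 xpredT | (b \notin RLMpos r k s) &&
     (b *m spmx sg f \in RMpos r s)) b) = \sum_(i < r | (i < k)%N && ~~ f i) 2.
  rewrite evxQ_sum /rlong big_map big_enum_cond big_mkcond [RHS]big_mkcond.
  apply: eq_bigr => i _ /=; rewrite evxQ_long.
  case: (ltnP i k) => ik /=; last by rewrite !if_same.
  rewrite /RLMpos /RMpos !mem_cat eps_mul !long_notminus !long_notplus.
  by case: (f i); rewrite ?long_mem //= leqNgt ik.
have SH1 : evxQ k (\sum_(b <- rlong 1 (fun i : 'I_r => (i < s)%N) | (b \notin RLHpos r k s) &&
     (b *m spmx sg f \in RHpos r s)) b) = \sum_(i < r | (i < k)%N && ~~ f i) 1.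
  rewrite evxQ_sum /rlong big_map big_enum_cond big_mkcond [RHS]big_mkcond.
  apply: eq_bigr => i _ /=; rewrite evxQ_long.
  case: (ltnP i k) => ik /=; last by rewrite !if_same.
  have his : (i < s)%N by apply: leq_trans ik hks.
  rewrite inE his /RLHpos /RHpos !mem_cat eps_mul !long_notminus !long_notplus /=.
  have ki : (k <= i)%N = false by rewrite leqNgt ik.
  by case: (f i); rewrite ?long_mem //= ki /= ?(sis i his).
have SH2 : evxQ k (\sum_(b <- rlong 2 (fun i : 'I_r => (s <= i)%N) | (b \notin RLHpos r k s) &&
     (b *m spmx sg f \in RHpos r s)) b) = 0.
  rewrite evxQ_sum /rlong big_map big_enum_cond big1 // => i /andP[si _].
  rewrite evxQ_long; case: ifP => // ik.
  by move: si; rewrite inE leqNgt (leq_trans ik hks).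
rewrite alg evxQD evxQN evxQD SM SH1 SH2 addr0.
have -> : \sum_(i < r | (i < k)%N && ~~ f i) (2 : int) =
          \sum_(i < r | (i < k)%N && ~~ f i) 1 + \sum_(i < r | (i < k)%N && ~~ f i) 1.
  by rewrite -big_split.
rewrite addrK.
have s0 : (0 < s + s)%N by lia.
pose x0 : 'I_(s + s) := Ordinal s0.
pose h := fun i : 'I_r => insubd x0 (sg i : nat).
set Y := [set i : 'I_r | (i < k)%N && ~~ f i].
have hv : forall i, i \in Y -> val (h i) = sg i.
  move=> i; rewrite inE => /andP[ik _]; rewrite val_insubd.
  have := sis i (leq_trans ik hks); case: ifP => //; lia.
have -> : [set x in Iw k s (spmx sg f) | (x < s)%N] = h @: Y.
  apply/setP => x; rewrite !inE; apply/idP/imsetP.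
  - case/andP => /existsP[i /existsP[j /and3P[ik js /orP[/andP[Aij xj]|/andP[_ xj]]]]] xs;
      last by move/eqP: xj => xj; exfalso; lia.
    move: Aij; rewrite mxE; case: (sg i =P j) => [sij|] //.
    case fi: (f i) => // _.
    have iY : i \in Y by rewrite /Y inE ik fi.
    exists i => //; apply: val_inj; rewrite hv // sij; exact/eqP.
  - case=> i iY ->; rewrite hv //; move: (iY); rewrite inE => /andP[ik fi].
    apply/andP; split; last exact: (sis i (leq_trans ik hks)).
    apply/existsP; exists i; apply/existsP; exists (sg i).
    apply/and3P; split => //; first exact: (sis i (leq_trans ik hks)).
    by rewrite mxE eqxx (negbTE fi) /= eqxx.
rewrite card_in_imset; last first.
  move=> i j hi hj Eh; apply: (@perm_inj _ sg); apply: val_inj.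
  by rewrite /= -hv // -(hv j) // Eh.
rewrite -sum1_card -natz natr_sum; apply: eq_bigl => i; by rewrite /Y inE.
Qed.
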